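(* Let $H$ be a $K_4^{3-}$-free 3-graph on 5 vertices with at least 3 edges. Then $H$ is isomorphic to one of the following 3-graphs on vertex set $[5]$: $C_5$ with edges $\{123,234,345,451,512\}$; $C_5^-$ with edges $\{123,234,345,451\}$; $F_{3,2}$ with edges $\{123,124,125,345\}$; $H_1$ with edges $\{123,124,135,145\}$; $F_5$ with edges $\{123,124,345\}$; $H_2$ with edges $\{123,124,135\}$; $H_3$ with edges $\{123,124,125\}$.
   Context: A 3-graph is a 3-uniform hypergraph. $K_4^{3-}$ is the 3-graph with vertex set $[4]$ and edges $123,124,134$. A 3-graph is $K_4^{3-}$-free if it contains no (not necessarily induced) subhypergraph isomorphic to $K_4^{3-}$. *)

(* Defs.v *)
From mathcomp Require Import all_boot.
Set Implicit Arguments. Unset Strict Implicit. Unset Printing Implicit Defensive.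

Definition is_3graph (V : finType) (E : {set {set V}}) : Prop :=
  forall e, e \in E -> #|e| = 3.

(* K_4^{3-} (edges 123,124,134) is contained (not necessarily induced) in E
   iff there are 4 distinct vertices a,b,c,d with abc, abd, acd edges. *)
Definition K4m_free (V : finType) (E : {set {set V}}) : Prop :=
  forall a b c d : V,
    [&& a != b, a != c, a != d, b != c, b != d & c != d] ->
    ~ ([set a; b; c] \in E /\ [set a; b; d] \in E /\ [set a; c; d] \in E).

(* The edge {i,j,k} on vertex set [5], with vertices 1..5 encoded as 0..4 in 'I_5. *)
Definition tri5 (i j k : nat) : {set 'I_5} :=
  [set (inord i.-1 : 'I_5); inord j.-1; inord k.-1].

Definition iso_to5 (V : finType) (E : {set {set V}}) (G : {set {set 'I_5}}) : Prop :=
  exists f : V -> 'I_5, bijective f /\ [set f @: (e : {set V}) | e : {set V} in E] = G.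

Definition C5 : {set {set 'I_5}} :=
  [set tri5 1 2 3; tri5 2 3 4; tri5 3 4 5; tri5 4 5 1; tri5 5 1 2].
Definition C5m : {set {set 'I_5}} :=
  [set tri5 1 2 3; tri5 2 3 4; tri5 3 4 5; tri5 4 5 1].
Definition F32 : {set {set 'I_5}} :=
  [set tri5 1 2 3; tri5 1 2 4; tri5 1 2 5; tri5 3 4 5].
Definition H1 : {set {set 'I_5}} :=
  [set tri5 1 2 3; tri5 1 2 4; tri5 1 3 5; tri5 1 4 5].
Definition F5 : {set {set 'I_5}} :=
  [set tri5 1 2 3; tri5 1 2 4; tri5 3 4 5].
Definition H2 : {set {set 'I_5}} :=
  [set tri5 1 2 3; tri5 1 2 4; tri5 1 3 5].
Definition H3 : {set {set 'I_5}} :=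
  [set tri5 1 2 3; tri5 1 2 4; tri5 1 2 5].

(* Main.v *)
Require Import Defs.
From mathcomp Require Import all_boot.
Set Implicit Arguments. Unset Strict Implicit. Unset Printing Implicit Defensive.

Definition o0 : 'I_5 := Ordinal (isT : 0 < 5).
Definition o1 : 'I_5 := Ordinal (isT : 1 < 5).
Definition o2 : 'I_5 := Ordinal (isT : 2 < 5).
Definition o3 : 'I_5 := Ordinal (isT : 3 < 5).
Definition o4 : 'I_5 := Ordinal (isT : 4 < 5).
Definition ords5 : seq 'I_5 := [:: o0; o1; o2; o3; o4].
Definition masks := [:: 7; 11; 13; 14; 19; 21; 22; 25; 26; 28].
Definition tbl : seq (seq (seq nat)) := [:: [:: [:: 10; 10; 10; 10; 10]; [:: 10; 10; 0; 1; 4]; [:: 10; 0; 10; 2; 5]; [:: 10; 1; 2; 10; 7]; [:: 10; 4; 5; 7; 10]]; [:: [:: 10; 10; 0; 1; 4]; [:: 10; 10; 10; 10; 10]; [:: 0; 10; 10; 3; 6]; [:: 1; 10; 3; 10; 8]; [:: 4; 10; 6; 8; 10]]; [:: [:: 10; 0; 10; 2; 5]; [:: 0; 10; 10; 3; 6]; [:: 10; 10; 10; 10; 10]; [:: 2; 3; 10; 10; 9]; [:: 5; 6; 10; 9; 10]]; [:: [:: 10; 1; 2; 10; 7]; [:: 1; 10; 3; 10; 8]; [:: 2; 3; 10; 10; 9]; [:: 10; 10; 10; 10; 10]; [:: 7; 8; 9; 10; 10]]; [:: [:: 10; 4; 5; 7; 10]; [:: 4; 10; 6; 8; 10]; [::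 5; 6; 10; 9; 10]; [:: 7; 8; 9; 10; 10]; [:: 10; 10; 10; 10; 10]]].
Definition tidx (x y z : 'I_5) : nat := nth 0 (nth [::] (nth [::] tbl x) y) z.
Definition cf (c : seq bool) (x y z : 'I_5) := nth false c (tidx x y z).
Definition dist3 (x y z : 'I_5) := [&& x != y, x != z & y != z].
Definition K4code (c : seq bool) :=
  all (fun a => all (fun b => all (fun d => all (fun e =>
    [&& a != b, a != d, a != e, b != d, b != e & d != e] ==>
    ~~ [&& cf c a b d, cf c a b e & cf c a d e]) ords5) ords5) ords5) ords5.
Fixpoint gen n : seq (seq bool) :=
  if n is n'.+1 then map (cons true) (gen n') ++ map (cons false) (gen n') else [:: [::]].
Definition fof (p : seq 'I_5) (x : 'I_5) : 'I_5 := nth o0 p x.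
Definition injb (f : 'I_5 -> 'I_5) :=
  all (fun x => all (fun y => (f x == f y) ==> (x == y)) ords5) ords5.
Definition Gcodes : seq (seq bool) :=
 [:: [::true; false; false; true; true; false; false; true; false; true];
     [::true; false; false; true; false; false; false; true; false; true];
     [::true; true; false; false; true; false; false; false; false; true];
     [::true; true; false; false; false; true; false; true; false; false];
     [::true; true; false; false; false; false; false; false; false; true];
     [::true; true; false; false; false; true; false; false; false; false];
     [::true; true; false; false; true; false; false; false; false; false]].
Definition matchG (c G : seq bool) (p : seq 'I_5) :=
  injb (fof p) && all (fun x => all (fun y => all (fun z => dist3 x y z ==>
     (cf c x y z == cf G (fof p x) (fof p y) (fof p z))) ords5) ords5) ords5.
Definition wits : seq (nat * seq nat) := [::(0, [:: 0; 1; 2; 3; 4]); (0, [:: 0; 1; 2; 3; 4]); (0, [:: 0; 1; 2; 3; 4]); (0, [:: 0; 1; 2; 3; 4]); (0, [:: 0; 1; 2; 3; 4]); (0, [:: 0; 1; 2; 3; 4]); (0, [:: 0; 1; 2; 3; 4]); (0, [:: 0; 1; 2; 3; 4]); (0, [:: 0; 1; 2; 3; 4]); (0, [:: 0; 1; 2; 3; 4]); (0, [:: 0; 1; 2; 3; 4]); (0, [:: 0; 1; 2; 3; 4]); (0, [:: 0; 1; 2; 3; 4]); (0, [:: 0; 1; 2; 3; 4]); (0, [:: 0; 1; 2; 3; 4]); (0, [:: 0; 1; 2; 3; 4]); (0, [:: 0; 1; 2; 3; 4]); (0, [:: 0; 1; 2; 3; 4]); (0, [:: 0; 1; 2; 3;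 4]); (0, [:: 0; 1; 2; 3; 4]); (0, [:: 0; 1; 2; 3; 4]); (0, [:: 0; 1; 2; 3; 4]); (0, [:: 0; 1; 2; 3; 4]); (0, [:: 0; 1; 2; 3; 4]); (0, [:: 0; 1; 2; 3; 4]); (0, [:: 0; 1; 2; 3; 4]); (0, [:: 0; 1; 2; 3; 4]); (0, [:: 0; 1; 2; 3; 4]); (0, [:: 0; 1; 2; 3; 4]); (0, [:: 0; 1; 2; 3; 4]); (0, [:: 0; 1; 2; 3; 4]); (0, [:: 0; 1; 2; 3; 4]); (0, [:: 0; 1; 2; 3; 4]); (0, [:: 0; 1; 2; 3; 4]); (0, [:: 0; 1; 2; 3; 4]); (0, [:: 0; 1; 2; 3; 4]); (0, [:: 0; 1; 2; 3; 4]); (0, [:: 0; 1; 2; 3; 4]); (0, [:: 0; 1; 2; 3; 4]); (0, [:: 0; 1; 2; 3; 4]); (0, [:: 0; 1; 2; 3; 4]); (0, [:: 0; 1; 2; 3; 4]); (0, [:: 0; 1; 2; 3; 4]); (0, [:: 0; 1; 2; 3; 4]); (0, [:: 0; 1; 2; 3; 4]); (0, [:: 0; 1; 2; 3; 4]); (0, [:: 0; 1; 2; 3; 4]); (0, [:: 0; 1; 2; 3; 4]); (0, [:: 0; 1; 2; 3; 4]); (0, [:: 0; 1; 2; 3; 4]); (0, [:: 0; 1; 2; 3; 4]); (0, [:: 0; 1; 2; 3; 4]); (0, [:: 0; 1; 2; 3; 4]); (0, [:: 0; 1; 2; 3; 4]); (0, [:: 0; 1; 2; 3; 4]); (0, [::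 0; 1; 2; 3; 4]); (0, [:: 0; 1; 2; 3; 4]); (0, [:: 0; 1; 2; 3; 4]); (0, [:: 0; 1; 2; 3; 4]); (0, [:: 0; 1; 2; 3; 4]); (0, [:: 0; 1; 2; 3; 4]); (0, [:: 0; 1; 2; 3; 4]); (0, [:: 0; 1; 2; 3; 4]); (0, [:: 0; 1; 2; 3; 4]); (0, [:: 0; 1; 2; 3; 4]); (0, [:: 0; 1; 2; 3; 4]); (0, [:: 0; 1; 2; 3; 4]); (0, [:: 0; 1; 2; 3; 4]); (0, [:: 0; 1; 2; 3; 4]); (0, [:: 0; 1; 2; 3; 4]); (0, [:: 0; 1; 2; 3; 4]); (0, [:: 0; 1; 2; 3; 4]); (0, [:: 0; 1; 2; 3; 4]); (0, [:: 0; 1; 2; 3; 4]); (0, [:: 0; 1; 2; 3; 4]); (0, [:: 0; 1; 2; 3; 4]); (0, [:: 0; 1; 2; 3; 4]); (0, [:: 0; 1; 2; 3; 4]); (0, [:: 0; 1; 2; 3; 4]); (0, [:: 0; 1; 2; 3; 4]); (0, [:: 0; 1; 2; 3; 4]); (0, [:: 0; 1; 2; 3; 4]); (0, [:: 0; 1; 2; 3; 4]); (0, [:: 0; 1; 2; 3; 4]); (0, [:: 0; 1; 2; 3; 4]); (0, [:: 0; 1; 2; 3; 4]); (0, [:: 0; 1; 2; 3; 4]); (0, [:: 0; 1; 2; 3; 4]); (0, [:: 0; 1; 2; 3; 4]); (0, [:: 0; 1; 2; 3; 4]); (0, [:: 0; 1; 2; 3; 4]); (0, [:: 0; 1; 2;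 3; 4]); (0, [:: 0; 1; 2; 3; 4]); (0, [:: 0; 1; 2; 3; 4]); (0, [:: 0; 1; 2; 3; 4]); (0, [:: 0; 1; 2; 3; 4]); (0, [:: 0; 1; 2; 3; 4]); (0, [:: 0; 1; 2; 3; 4]); (0, [:: 0; 1; 2; 3; 4]); (0, [:: 0; 1; 2; 3; 4]); (0, [:: 0; 1; 2; 3; 4]); (0, [:: 0; 1; 2; 3; 4]); (0, [:: 0; 1; 2; 3; 4]); (0, [:: 0; 1; 2; 3; 4]); (0, [:: 0; 1; 2; 3; 4]); (0, [:: 0; 1; 2; 3; 4]); (0, [:: 0; 1; 2; 3; 4]); (0, [:: 0; 1; 2; 3; 4]); (0, [:: 0; 1; 2; 3; 4]); (0, [:: 0; 1; 2; 3; 4]); (0, [:: 0; 1; 2; 3; 4]); (0, [:: 0; 1; 2; 3; 4]); (0, [:: 0; 1; 2; 3; 4]); (0, [:: 0; 1; 2; 3; 4]); (0, [:: 0; 1; 2; 3; 4]); (0, [:: 0; 1; 2; 3; 4]); (0, [:: 0; 1; 2; 3; 4]); (0, [:: 0; 1; 2; 3; 4]); (0, [:: 0; 1; 2; 3; 4]); (0, [:: 0; 1; 2; 3; 4]); (0, [:: 0; 1; 2; 3; 4]); (0, [:: 0; 1; 2; 3; 4]); (0, [:: 0; 1; 2; 3; 4]); (0, [:: 0; 1; 2; 3; 4]); (0, [:: 0; 1; 2; 3; 4]); (0, [:: 0; 1; 2; 3; 4]); (0, [:: 0; 1; 2; 3; 4]); (0, [:: 0; 1; 2; 3; 4]); (0,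 [:: 0; 1; 2; 3; 4]); (0, [:: 0; 1; 2; 3; 4]); (0, [:: 0; 1; 2; 3; 4]); (0, [:: 0; 1; 2; 3; 4]); (0, [:: 0; 1; 2; 3; 4]); (0, [:: 0; 1; 2; 3; 4]); (0, [:: 0; 1; 2; 3; 4]); (0, [:: 0; 1; 2; 3; 4]); (0, [:: 0; 1; 2; 3; 4]); (0, [:: 0; 1; 2; 3; 4]); (0, [:: 0; 1; 2; 3; 4]); (0, [:: 0; 1; 2; 3; 4]); (0, [:: 0; 1; 2; 3; 4]); (0, [:: 0; 1; 2; 3; 4]); (0, [:: 0; 1; 2; 3; 4]); (0, [:: 0; 1; 2; 3; 4]); (0, [:: 0; 1; 2; 3; 4]); (0, [:: 0; 1; 2; 3; 4]); (0, [:: 0; 1; 2; 3; 4]); (0, [:: 0; 1; 2; 3; 4]); (0, [:: 0; 1; 2; 3; 4]); (0, [:: 0; 1; 2; 3; 4]); (0, [:: 0; 1; 2; 3; 4]); (0, [:: 0; 1; 2; 3; 4]); (0, [:: 0; 1; 2; 3; 4]); (0, [:: 0; 1; 2; 3; 4]); (0, [:: 0; 1; 2; 3; 4]); (0, [:: 0; 1; 2; 3; 4]); (0, [:: 0; 1; 2; 3; 4]); (0, [:: 0; 1; 2; 3; 4]); (0, [:: 0; 1; 2; 3; 4]); (0, [:: 0; 1; 2; 3; 4]); (0, [:: 0; 1; 2; 3; 4]); (0, [:: 0; 1; 2; 3; 4]); (0, [:: 0; 1; 2; 3; 4]); (0, [:: 0; 1; 2; 3; 4]); (0, [:: 0; 1;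 2; 3; 4]); (0, [:: 0; 1; 2; 3; 4]); (0, [:: 0; 1; 2; 3; 4]); (0, [:: 0; 1; 2; 3; 4]); (0, [:: 0; 1; 2; 3; 4]); (0, [:: 0; 1; 2; 3; 4]); (0, [:: 0; 1; 2; 3; 4]); (0, [:: 0; 1; 2; 3; 4]); (0, [:: 0; 1; 2; 3; 4]); (0, [:: 0; 1; 2; 3; 4]); (0, [:: 0; 1; 2; 3; 4]); (0, [:: 0; 1; 2; 3; 4]); (0, [:: 0; 1; 2; 3; 4]); (0, [:: 0; 1; 2; 3; 4]); (0, [:: 0; 1; 2; 3; 4]); (0, [:: 0; 1; 2; 3; 4]); (0, [:: 0; 1; 2; 3; 4]); (0, [:: 0; 1; 2; 3; 4]); (0, [:: 0; 1; 2; 3; 4]); (0, [:: 0; 1; 2; 3; 4]); (0, [:: 0; 1; 2; 3; 4]); (0, [:: 0; 1; 2; 3; 4]); (0, [:: 0; 1; 2; 3; 4]); (0, [:: 0; 1; 2; 3; 4]); (0, [:: 0; 1; 2; 3; 4]); (0, [:: 0; 1; 2; 3; 4]); (0, [:: 0; 1; 2; 3; 4]); (0, [:: 0; 1; 2; 3; 4]); (0, [:: 0; 1; 2; 3; 4]); (0, [:: 0; 1; 2; 3; 4]); (0, [:: 0; 1; 2; 3; 4]); (0, [:: 0; 1; 2; 3; 4]); (0, [:: 0; 1; 2; 3; 4]); (0, [:: 0; 1; 2; 3; 4]); (0, [:: 0; 1; 2; 3; 4]); (0, [:: 0; 1; 2; 3; 4]); (0, [:: 0; 1; 2; 3; 4]);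 (0, [:: 0; 1; 2; 3; 4]); (0, [:: 0; 1; 2; 3; 4]); (0, [:: 0; 1; 2; 3; 4]); (0, [:: 0; 1; 2; 3; 4]); (0, [:: 0; 1; 2; 3; 4]); (0, [:: 0; 1; 2; 3; 4]); (0, [:: 0; 1; 2; 3; 4]); (0, [:: 0; 1; 2; 3; 4]); (0, [:: 0; 1; 2; 3; 4]); (0, [:: 0; 1; 2; 3; 4]); (0, [:: 0; 1; 2; 3; 4]); (0, [:: 0; 1; 2; 3; 4]); (0, [:: 0; 1; 2; 3; 4]); (0, [:: 0; 1; 2; 3; 4]); (0, [:: 0; 1; 2; 3; 4]); (0, [:: 0; 1; 2; 3; 4]); (0, [:: 0; 1; 2; 3; 4]); (0, [:: 0; 1; 2; 3; 4]); (0, [:: 0; 1; 2; 3; 4]); (0, [:: 0; 1; 2; 3; 4]); (0, [:: 0; 1; 2; 3; 4]); (2, [:: 0; 1; 2; 3; 4]); (6, [:: 0; 1; 2; 3; 4]); (0, [:: 0; 1; 2; 3; 4]); (0, [:: 0; 1; 2; 3; 4]); (0, [:: 0; 1; 2; 3; 4]); (0, [:: 0; 1; 2; 3; 4]); (0, [:: 0; 1; 2; 3; 4]); (0, [:: 0; 1; 2; 3; 4]); (0, [:: 0; 1; 2; 3; 4]); (0, [:: 0; 1; 2; 3; 4]); (0, [:: 0; 1; 2; 3; 4]); (0, [:: 0; 1; 2; 3; 4]); (0, [:: 0; 1; 2; 3; 4]); (3, [:: 0; 1; 2; 3; 4]); (0, [:: 0; 1; 4; 2; 3]); (1, [:: 2;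 3; 1; 4; 0]); (1, [:: 2; 1; 3; 0; 4]); (5, [:: 0; 1; 2; 3; 4]); (0, [:: 0; 1; 2; 3; 4]); (0, [:: 0; 1; 2; 3; 4]); (0, [:: 0; 1; 2; 4; 3]); (1, [:: 2; 3; 4; 1; 0]); (0, [:: 0; 1; 2; 3; 4]); (3, [:: 1; 0; 2; 3; 4]); (1, [:: 1; 2; 3; 0; 4]); (5, [:: 1; 0; 2; 3; 4]); (0, [:: 0; 1; 2; 3; 4]); (0, [:: 0; 1; 2; 3; 4]); (1, [:: 2; 1; 0; 3; 4]); (5, [:: 0; 1; 3; 2; 4]); (1, [:: 1; 2; 0; 3; 4]); (5, [:: 1; 0; 3; 2; 4]); (4, [:: 0; 1; 2; 3; 4]); (0, [:: 0; 1; 2; 3; 4]); (0, [:: 0; 1; 2; 3; 4]); (0, [:: 0; 1; 2; 3; 4]); (0, [:: 0; 1; 2; 3; 4]); (0, [:: 0; 1; 2; 3; 4]); (0, [:: 0; 1; 2; 3; 4]); (0, [:: 0; 1; 2; 3; 4]); (0, [:: 0; 1; 2; 3; 4]); (0, [:: 0; 1; 2; 3; 4]); (0, [:: 0; 1; 2; 3; 4]); (0, [:: 0; 1; 2; 3; 4]); (0, [:: 0; 1; 2; 3; 4]); (0, [:: 0; 1; 2; 3; 4]); (0, [:: 0; 1; 2; 3; 4]); (0, [:: 0; 1; 2; 3; 4]); (0, [:: 0; 1; 2; 3; 4]); (0, [:: 0; 1; 2; 3; 4]); (0, [:: 0; 1; 2; 3; 4]); (0, [:: 0; 1; 2; 3;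 4]); (0, [:: 0; 1; 2; 3; 4]); (0, [:: 0; 1; 2; 3; 4]); (0, [:: 0; 1; 2; 3; 4]); (0, [:: 0; 1; 2; 3; 4]); (0, [:: 0; 1; 2; 3; 4]); (0, [:: 0; 1; 2; 3; 4]); (0, [:: 0; 1; 2; 3; 4]); (0, [:: 0; 1; 2; 3; 4]); (0, [:: 0; 1; 2; 3; 4]); (0, [:: 0; 1; 2; 3; 4]); (0, [:: 0; 1; 2; 3; 4]); (0, [:: 0; 1; 2; 3; 4]); (0, [:: 0; 1; 2; 3; 4]); (0, [:: 0; 1; 2; 3; 4]); (0, [:: 0; 1; 2; 3; 4]); (0, [:: 0; 1; 2; 3; 4]); (0, [:: 0; 1; 2; 3; 4]); (0, [:: 0; 1; 2; 3; 4]); (0, [:: 0; 1; 2; 3; 4]); (0, [:: 0; 1; 2; 3; 4]); (0, [:: 0; 1; 2; 3; 4]); (0, [:: 0; 1; 2; 3; 4]); (0, [:: 0; 1; 2; 3; 4]); (0, [:: 0; 1; 2; 3; 4]); (0, [:: 0; 1; 2; 3; 4]); (0, [:: 0; 1; 2; 3; 4]); (0, [:: 0; 1; 2; 3; 4]); (0, [:: 0; 1; 2; 3; 4]); (0, [:: 0; 1; 2; 3; 4]); (0, [:: 0; 1; 2; 3; 4]); (0, [:: 0; 1; 2; 3; 4]); (0, [:: 0; 1; 2; 3; 4]); (0, [:: 0; 1; 2; 3; 4]); (0, [:: 0; 1; 2; 3; 4]); (0, [:: 0; 1; 2; 3; 4]); (0, [:: 0; 1; 2; 3; 4]); (0, [::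 0; 1; 2; 3; 4]); (0, [:: 0; 1; 2; 3; 4]); (0, [:: 0; 1; 2; 3; 4]); (0, [:: 0; 1; 2; 3; 4]); (0, [:: 0; 1; 2; 3; 4]); (0, [:: 0; 1; 2; 3; 4]); (0, [:: 0; 1; 2; 3; 4]); (0, [:: 0; 1; 2; 3; 4]); (0, [:: 0; 1; 2; 3; 4]); (0, [:: 0; 1; 2; 3; 4]); (0, [:: 0; 1; 2; 3; 4]); (0, [:: 0; 1; 2; 3; 4]); (0, [:: 0; 1; 2; 3; 4]); (0, [:: 0; 1; 2; 3; 4]); (0, [:: 0; 1; 2; 3; 4]); (0, [:: 0; 1; 2; 3; 4]); (0, [:: 0; 1; 2; 3; 4]); (0, [:: 0; 1; 2; 3; 4]); (0, [:: 0; 1; 2; 3; 4]); (0, [:: 0; 1; 2; 3; 4]); (0, [:: 0; 1; 2; 3; 4]); (0, [:: 0; 1; 2; 3; 4]); (0, [:: 0; 1; 2; 3; 4]); (0, [:: 0; 1; 2; 3; 4]); (0, [:: 0; 1; 2; 3; 4]); (0, [:: 0; 1; 2; 3; 4]); (0, [:: 0; 1; 2; 3; 4]); (0, [:: 0; 1; 2; 3; 4]); (0, [:: 0; 1; 2; 3; 4]); (0, [:: 0; 1; 2; 3; 4]); (0, [:: 0; 1; 2; 3; 4]); (0, [:: 0; 1; 2; 3; 4]); (0, [:: 0; 1; 2; 3; 4]); (0, [:: 0; 1; 2; 3; 4]); (0, [:: 0; 1; 2; 3; 4]); (0, [:: 0; 1; 2; 3; 4]); (0, [:: 0; 1; 2;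 3; 4]); (3, [:: 0; 1; 2; 4; 3]); (0, [:: 0; 1; 4; 3; 2]); (1, [:: 2; 3; 1; 0; 4]); (1, [:: 2; 1; 3; 4; 0]); (5, [:: 0; 1; 2; 4; 3]); (0, [:: 0; 1; 2; 3; 4]); (0, [:: 0; 1; 2; 3; 4]); (0, [:: 0; 1; 2; 3; 4]); (0, [:: 0; 1; 2; 3; 4]); (0, [:: 0; 1; 2; 3; 4]); (0, [:: 0; 1; 2; 3; 4]); (0, [:: 0; 1; 2; 3; 4]); (0, [:: 0; 1; 2; 3; 4]); (0, [:: 0; 1; 2; 3; 4]); (0, [:: 0; 1; 2; 3; 4]); (0, [:: 0; 1; 2; 3; 4]); (0, [:: 0; 1; 2; 3; 4]); (0, [:: 0; 1; 2; 3; 4]); (2, [:: 0; 2; 1; 3; 4]); (0, [:: 0; 1; 2; 3; 4]); (6, [:: 0; 2; 1; 3; 4]); (0, [:: 0; 1; 2; 3; 4]); (0, [:: 0; 2; 1; 4; 3]); (0, [:: 0; 1; 2; 3; 4]); (1, [:: 2; 4; 3; 1; 0]); (0, [:: 0; 1; 2; 3; 4]); (1, [:: 1; 3; 2; 0; 4]); (3, [:: 1; 2; 0; 3; 4]); (5, [:: 1; 2; 0; 3; 4]); (0, [:: 0; 1; 2; 3; 4]); (1, [:: 2; 0; 1; 3; 4]); (0, [:: 0; 1; 2; 3; 4]); (5, [:: 0; 3; 1; 2; 4]); (1, [:: 1; 0; 2; 3; 4]); (4, [:: 0; 2; 1; 3; 4]); (5, [:: 1; 3; 0; 2; 4]); (0,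 [:: 0; 1; 2; 3; 4]); (0, [:: 0; 1; 2; 3; 4]); (0, [:: 0; 1; 2; 3; 4]); (0, [:: 0; 1; 2; 3; 4]); (0, [:: 0; 1; 2; 3; 4]); (0, [:: 0; 1; 2; 3; 4]); (0, [:: 0; 1; 2; 3; 4]); (0, [:: 0; 1; 2; 3; 4]); (0, [:: 0; 1; 2; 3; 4]); (0, [:: 0; 1; 2; 3; 4]); (0, [:: 0; 1; 2; 3; 4]); (0, [:: 0; 1; 2; 3; 4]); (0, [:: 0; 1; 2; 3; 4]); (0, [:: 0; 1; 2; 3; 4]); (0, [:: 0; 1; 2; 3; 4]); (0, [:: 0; 1; 2; 3; 4]); (0, [:: 0; 1; 2; 3; 4]); (0, [:: 0; 1; 2; 3; 4]); (0, [:: 0; 1; 2; 3; 4]); (0, [:: 0; 1; 2; 3; 4]); (0, [:: 0; 1; 2; 3; 4]); (0, [:: 0; 1; 2; 3; 4]); (0, [:: 0; 1; 2; 3; 4]); (0, [:: 0; 1; 2; 3; 4]); (0, [:: 0; 1; 2; 3; 4]); (0, [:: 0; 1; 2; 3; 4]); (0, [:: 0; 1; 2; 3; 4]); (0, [:: 0; 1; 2; 3; 4]); (1, [:: 2; 3; 4; 0; 1]); (0, [:: 0; 1; 2; 3; 4]); (3, [:: 1; 0; 2; 4; 3]); (1, [:: 1; 2; 3; 4; 0]); (5, [:: 1; 0; 2; 4; 3]); (0, [:: 0; 1; 2; 3; 4]); (0, [:: 0; 1; 2; 3; 4]); (0, [:: 0; 1; 2; 3; 4]); (0, [:: 0; 1;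 2; 3; 4]); (0, [:: 0; 1; 2; 3; 4]); (0, [:: 0; 1; 2; 3; 4]); (0, [:: 0; 1; 2; 3; 4]); (0, [:: 0; 1; 2; 3; 4]); (0, [:: 0; 1; 2; 3; 4]); (0, [:: 0; 2; 1; 3; 4]); (0, [:: 0; 1; 2; 3; 4]); (1, [:: 2; 4; 3; 0; 1]); (0, [:: 0; 1; 2; 3; 4]); (1, [:: 1; 3; 2; 4; 0]); (3, [:: 1; 2; 0; 4; 3]); (5, [:: 1; 2; 0; 4; 3]); (0, [:: 0; 1; 2; 3; 4]); (0, [:: 0; 1; 2; 3; 4]); (0, [:: 0; 1; 2; 3; 4]); (2, [:: 2; 0; 1; 3; 4]); (0, [:: 0; 1; 2; 3; 4]); (0, [:: 0; 1; 2; 3; 4]); (0, [:: 0; 1; 2; 3; 4]); (6, [:: 2; 0; 1; 3; 4]); (0, [:: 0; 1; 2; 3; 4]); (1, [:: 0; 2; 1; 3; 4]); (1, [:: 0; 1; 2; 3; 4]); (4, [:: 2; 0; 1; 3; 4]); (0, [:: 0; 1; 2; 3; 4]); (5, [:: 3; 0; 1; 2; 4]); (5, [:: 3; 1; 0; 2; 4]); (0, [:: 0; 1; 2; 3; 4]); (0, [:: 0; 1; 2; 3; 4]); (0, [:: 0; 1; 2; 3; 4]); (0, [:: 0; 1; 2; 3; 4]); (0, [:: 0; 1; 2; 3; 4]); (0, [:: 0; 1; 2; 3; 4]); (0, [:: 0; 1; 2; 3; 4]); (0, [:: 0; 1; 2; 3; 4]); (0, [:: 0; 1; 2; 3; 4]);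 (0, [:: 0; 1; 2; 3; 4]); (0, [:: 0; 1; 2; 3; 4]); (0, [:: 0; 1; 2; 3; 4]); (0, [:: 0; 1; 2; 3; 4]); (0, [:: 0; 1; 2; 3; 4]); (0, [:: 0; 1; 2; 3; 4]); (0, [:: 0; 1; 2; 3; 4]); (0, [:: 0; 1; 2; 3; 4]); (0, [:: 0; 1; 2; 3; 4]); (0, [:: 0; 1; 2; 3; 4]); (0, [:: 0; 1; 2; 3; 4]); (0, [:: 0; 1; 2; 3; 4]); (0, [:: 0; 1; 2; 3; 4]); (0, [:: 0; 1; 2; 3; 4]); (0, [:: 0; 1; 2; 3; 4]); (0, [:: 0; 1; 2; 3; 4]); (0, [:: 0; 1; 2; 3; 4]); (0, [:: 0; 1; 2; 3; 4]); (1, [:: 2; 1; 0; 4; 3]); (5, [:: 0; 1; 3; 4; 2]); (1, [:: 1; 2; 0; 4; 3]); (5, [:: 1; 0; 3; 4; 2]); (4, [:: 0; 1; 2; 4; 3]); (0, [:: 0; 1; 2; 3; 4]); (0, [:: 0; 1; 2; 3; 4]); (0, [:: 0; 1; 2; 3; 4]); (0, [:: 0; 1; 2; 3; 4]); (0, [:: 0; 1; 2; 3; 4]); (0, [:: 0; 1; 2; 3; 4]); (0, [:: 0; 1; 2; 3; 4]); (0, [:: 0; 1; 2; 3; 4]); (0, [:: 0; 1; 2; 3; 4]); (0, [:: 0; 1; 2; 3; 4]); (1, [:: 2; 0; 1; 4; 3]); (0, [:: 0; 1; 2; 3; 4]); (5, [:: 0; 3; 1; 4; 2]); (1, [:: 1;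 0; 2; 4; 3]); (4, [:: 0; 2; 1; 4; 3]); (5, [:: 1; 3; 0; 4; 2]); (0, [:: 0; 1; 2; 3; 4]); (0, [:: 0; 1; 2; 3; 4]); (1, [:: 0; 2; 1; 4; 3]); (1, [:: 0; 1; 2; 4; 3]); (4, [:: 2; 0; 1; 4; 3]); (0, [:: 0; 1; 2; 3; 4]); (5, [:: 3; 0; 1; 4; 2]); (5, [:: 3; 1; 0; 4; 2]); (0, [:: 0; 1; 2; 3; 4]); (2, [:: 2; 3; 4; 0; 1]); (4, [:: 2; 3; 4; 0; 1]); (4, [:: 2; 4; 3; 0; 1]); (0, [:: 0; 1; 2; 3; 4]); (4, [:: 4; 2; 3; 0; 1]); (0, [:: 0; 1; 2; 3; 4]); (0, [:: 0; 1; 2; 3; 4]); (0, [:: 0; 1; 2; 3; 4]); (0, [:: 0; 1; 2; 3; 4]); (0, [:: 0; 1; 2; 3; 4]); (0, [:: 0; 1; 2; 3; 4]); (0, [:: 0; 1; 2; 3; 4]); (0, [:: 0; 1; 2; 3; 4]); (0, [:: 0; 1; 2; 3; 4]); (0, [:: 0; 1; 2; 3; 4]); (0, [:: 0; 1; 2; 3; 4]); (0, [:: 0; 1; 2; 3; 4]); (0, [:: 0; 1; 2; 3; 4]); (0, [:: 0; 1; 2; 3; 4]); (0, [:: 0; 1; 2; 3; 4]); (0, [:: 0; 1; 2; 3; 4]); (0, [:: 0; 1; 2; 3; 4]); (0, [:: 0; 1; 2; 3; 4]); (0, [:: 0; 1; 2; 3; 4]); (0, [:: 0; 1; 2; 3;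 4]); (0, [:: 0; 1; 2; 3; 4]); (0, [:: 0; 1; 2; 3; 4]); (0, [:: 0; 1; 2; 3; 4]); (0, [:: 0; 1; 2; 3; 4]); (0, [:: 0; 1; 2; 3; 4]); (0, [:: 0; 1; 2; 3; 4]); (0, [:: 0; 1; 2; 3; 4]); (0, [:: 0; 1; 2; 3; 4]); (0, [:: 0; 1; 2; 3; 4]); (0, [:: 0; 1; 2; 3; 4]); (0, [:: 0; 1; 2; 3; 4]); (0, [:: 0; 1; 2; 3; 4]); (0, [:: 0; 1; 2; 3; 4]); (0, [:: 0; 1; 2; 3; 4]); (0, [:: 0; 1; 2; 3; 4]); (0, [:: 0; 1; 2; 3; 4]); (0, [:: 0; 1; 2; 3; 4]); (0, [:: 0; 1; 2; 3; 4]); (0, [:: 0; 1; 2; 3; 4]); (0, [:: 0; 1; 2; 3; 4]); (0, [:: 0; 1; 2; 3; 4]); (0, [:: 0; 1; 2; 3; 4]); (0, [:: 0; 1; 2; 3; 4]); (0, [:: 0; 1; 2; 3; 4]); (0, [:: 0; 1; 2; 3; 4]); (0, [:: 0; 1; 2; 3; 4]); (0, [:: 0; 1; 2; 3; 4]); (0, [:: 0; 1; 2; 3; 4]); (0, [:: 0; 1; 2; 3; 4]); (0, [:: 0; 1; 2; 3; 4]); (0, [:: 0; 1; 2; 3; 4]); (0, [:: 0; 1; 2; 3; 4]); (0, [:: 0; 1; 2; 3; 4]); (0, [:: 0; 1; 2; 3; 4]); (0, [:: 0; 1; 2; 3; 4]); (0, [:: 0; 1; 2; 3; 4]); (0, [::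 0; 1; 2; 3; 4]); (0, [:: 0; 1; 2; 3; 4]); (0, [:: 0; 1; 2; 3; 4]); (0, [:: 0; 1; 2; 3; 4]); (0, [:: 0; 1; 2; 3; 4]); (0, [:: 0; 1; 2; 3; 4]); (0, [:: 0; 1; 2; 3; 4]); (0, [:: 0; 1; 2; 3; 4]); (0, [:: 0; 1; 2; 3; 4]); (0, [:: 0; 1; 2; 3; 4]); (0, [:: 0; 1; 2; 3; 4]); (0, [:: 0; 1; 2; 3; 4]); (0, [:: 0; 1; 2; 3; 4]); (0, [:: 0; 1; 2; 3; 4]); (0, [:: 0; 1; 2; 3; 4]); (0, [:: 0; 1; 2; 3; 4]); (0, [:: 0; 1; 2; 3; 4]); (0, [:: 0; 1; 2; 3; 4]); (0, [:: 0; 1; 2; 3; 4]); (0, [:: 0; 1; 2; 3; 4]); (0, [:: 0; 1; 2; 3; 4]); (0, [:: 0; 1; 2; 3; 4]); (0, [:: 0; 1; 2; 3; 4]); (0, [:: 0; 1; 2; 3; 4]); (0, [:: 0; 1; 2; 3; 4]); (0, [:: 0; 1; 2; 3; 4]); (3, [:: 0; 1; 4; 2; 3]); (0, [:: 0; 1; 2; 3; 4]); (0, [:: 0; 1; 2; 3; 4]); (0, [:: 0; 1; 2; 3; 4]); (0, [:: 0; 1; 2; 3; 4]); (0, [:: 0; 1; 2; 3; 4]); (0, [:: 0; 1; 2; 3; 4]); (0, [:: 0; 1; 3; 4; 2]); (1, [:: 2; 3; 0; 1; 4]); (0, [:: 0; 1; 2; 3; 4]); (0, [:: 0; 1; 2;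 3; 4]); (0, [:: 0; 1; 2; 3; 4]); (0, [:: 0; 1; 2; 3; 4]); (0, [:: 0; 1; 2; 3; 4]); (0, [:: 0; 1; 2; 3; 4]); (1, [:: 2; 1; 4; 3; 0]); (5, [:: 0; 1; 4; 2; 3]); (0, [:: 0; 1; 2; 3; 4]); (0, [:: 0; 1; 2; 3; 4]); (0, [:: 0; 1; 2; 3; 4]); (0, [:: 0; 1; 2; 3; 4]); (0, [:: 0; 1; 2; 3; 4]); (0, [:: 0; 2; 4; 1; 3]); (0, [:: 0; 1; 2; 3; 4]); (1, [:: 2; 0; 3; 1; 4]); (0, [:: 0; 1; 2; 3; 4]); (0, [:: 0; 1; 2; 3; 4]); (0, [:: 0; 1; 2; 3; 4]); (0, [:: 0; 1; 2; 3; 4]); (0, [:: 0; 1; 2; 3; 4]); (1, [:: 2; 4; 1; 3; 0]); (0, [:: 0; 1; 2; 3; 4]); (5, [:: 0; 3; 2; 1; 4]); (0, [:: 0; 1; 2; 3; 4]); (0, [:: 0; 1; 2; 3; 4]); (0, [:: 0; 1; 2; 3; 4]); (2, [:: 0; 2; 3; 1; 4]); (0, [:: 0; 1; 2; 3; 4]); (1, [:: 1; 3; 0; 2; 4]); (1, [:: 1; 0; 3; 2; 4]); (4, [:: 0; 2; 3; 1; 4]); (0, [:: 0; 1; 2; 3; 4]); (0, [:: 0; 1; 2; 3; 4]); (0, [:: 0; 1; 2; 3; 4]); (6, [:: 0; 2; 3; 1; 4]); (3, [:: 1; 2; 3; 0; 4]); (5, [:: 1; 2; 3; 0; 4]); (5,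 [:: 1; 3; 2; 0; 4]); (0, [:: 0; 1; 2; 3; 4]); (0, [:: 0; 1; 2; 3; 4]); (0, [:: 0; 1; 2; 3; 4]); (0, [:: 0; 1; 2; 3; 4]); (0, [:: 0; 1; 2; 3; 4]); (0, [:: 0; 1; 2; 3; 4]); (0, [:: 0; 1; 2; 3; 4]); (0, [:: 0; 1; 2; 3; 4]); (0, [:: 0; 1; 2; 3; 4]); (0, [:: 0; 1; 2; 3; 4]); (0, [:: 0; 1; 2; 3; 4]); (0, [:: 0; 1; 2; 3; 4]); (0, [:: 0; 1; 2; 3; 4]); (0, [:: 0; 1; 2; 3; 4]); (0, [:: 0; 1; 2; 3; 4]); (0, [:: 0; 1; 3; 2; 4]); (1, [:: 2; 3; 0; 4; 1]); (0, [:: 0; 1; 2; 3; 4]); (0, [:: 0; 1; 2; 3; 4]); (0, [:: 0; 1; 2; 3; 4]); (0, [:: 0; 1; 2; 3; 4]); (0, [:: 0; 1; 2; 3; 4]); (0, [:: 0; 1; 2; 3; 4]); (0, [:: 0; 1; 2; 3; 4]); (3, [:: 1; 0; 4; 2; 3]); (0, [:: 0; 1; 2; 3; 4]); (0, [:: 0; 1; 2; 3; 4]); (0, [:: 0; 1; 2; 3; 4]); (0, [:: 0; 1; 2; 3; 4]); (0, [:: 0; 1; 2; 3; 4]); (0, [:: 0; 1; 2; 3; 4]); (1, [:: 1; 2; 4; 3; 0]); (5, [:: 1; 0; 4; 2; 3]); (0, [:: 0; 1; 2; 3; 4]); (0, [:: 0; 1; 2; 3; 4]); (0, [:: 0; 1;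 2; 3; 4]); (0, [:: 0; 2; 3; 1; 4]); (0, [:: 0; 1; 2; 3; 4]); (0, [:: 0; 1; 2; 3; 4]); (0, [:: 0; 1; 2; 3; 4]); (1, [:: 0; 2; 3; 1; 4]); (0, [:: 0; 1; 2; 3; 4]); (0, [:: 0; 1; 2; 3; 4]); (0, [:: 0; 1; 2; 3; 4]); (1, [:: 2; 4; 0; 3; 1]); (0, [:: 0; 1; 2; 3; 4]); (2, [:: 2; 0; 3; 1; 4]); (1, [:: 0; 1; 3; 2; 4]); (4, [:: 2; 0; 3; 1; 4]); (0, [:: 0; 1; 2; 3; 4]); (0, [:: 0; 1; 2; 3; 4]); (0, [:: 0; 1; 2; 3; 4]); (1, [:: 1; 3; 4; 2; 0]); (0, [:: 0; 1; 2; 3; 4]); (0, [:: 0; 1; 2; 3; 4]); (0, [:: 0; 1; 2; 3; 4]); (5, [:: 3; 0; 2; 1; 4]); (0, [:: 0; 1; 2; 3; 4]); (0, [:: 0; 1; 2; 3; 4]); (3, [:: 1; 2; 4; 0; 3]); (5, [:: 1; 2; 4; 0; 3]); (0, [:: 0; 1; 2; 3; 4]); (6, [:: 2; 0; 3; 1; 4]); (5, [:: 3; 1; 2; 0; 4]); (0, [:: 0; 1; 2; 3; 4]); (0, [:: 0; 1; 2; 3; 4]); (0, [:: 0; 1; 2; 3; 4]); (0, [:: 0; 1; 2; 3; 4]); (0, [:: 0; 1; 2; 3; 4]); (0, [:: 0; 1; 2; 3; 4]); (0, [:: 0; 1; 2; 3; 4]); (0, [:: 0; 1; 2; 3; 4]);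 (0, [:: 0; 1; 2; 3; 4]); (0, [:: 0; 1; 2; 3; 4]); (0, [:: 0; 1; 2; 3; 4]); (0, [:: 0; 1; 2; 3; 4]); (0, [:: 0; 1; 2; 3; 4]); (0, [:: 0; 1; 2; 3; 4]); (0, [:: 0; 1; 2; 3; 4]); (1, [:: 2; 1; 4; 0; 3]); (5, [:: 0; 1; 4; 3; 2]); (0, [:: 0; 1; 2; 3; 4]); (0, [:: 0; 1; 2; 3; 4]); (0, [:: 0; 1; 2; 3; 4]); (0, [:: 0; 1; 2; 3; 4]); (0, [:: 0; 1; 2; 3; 4]); (0, [:: 0; 1; 2; 3; 4]); (1, [:: 1; 2; 4; 0; 3]); (5, [:: 1; 0; 4; 3; 2]); (0, [:: 0; 1; 2; 3; 4]); (0, [:: 0; 1; 2; 3; 4]); (0, [:: 0; 1; 2; 3; 4]); (0, [:: 0; 1; 2; 3; 4]); (0, [:: 0; 1; 2; 3; 4]); (0, [:: 0; 1; 2; 3; 4]); (4, [:: 0; 1; 4; 2; 3]); (0, [:: 0; 1; 2; 3; 4]); (0, [:: 0; 1; 2; 3; 4]); (0, [:: 0; 1; 2; 3; 4]); (0, [:: 0; 1; 2; 3; 4]); (1, [:: 2; 0; 4; 1; 3]); (0, [:: 0; 1; 2; 3; 4]); (1, [:: 0; 2; 4; 1; 3]); (2, [:: 2; 3; 0; 4; 1]); (4, [:: 2; 3; 0; 4; 1]); (0, [:: 0; 1; 2; 3; 4]); (0, [:: 0; 1; 2; 3; 4]); (0, [:: 0; 1; 2; 3; 4]); (5, [:: 0;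 3; 4; 1; 2]); (1, [:: 0; 1; 4; 2; 3]); (4, [:: 2; 0; 4; 1; 3]); (4, [:: 2; 4; 0; 3; 1]); (0, [:: 0; 1; 2; 3; 4]); (0, [:: 0; 1; 2; 3; 4]); (0, [:: 0; 1; 2; 3; 4]); (1, [:: 1; 0; 4; 2; 3]); (4, [:: 0; 2; 4; 1; 3]); (0, [:: 0; 1; 2; 3; 4]); (5, [:: 3; 0; 4; 1; 2]); (4, [:: 4; 2; 0; 3; 1]); (0, [:: 0; 1; 2; 3; 4]); (0, [:: 0; 1; 2; 3; 4]); (0, [:: 0; 1; 2; 3; 4]); (5, [:: 1; 3; 4; 0; 2]); (0, [:: 0; 1; 2; 3; 4]); (5, [:: 3; 1; 4; 0; 2]); (0, [:: 0; 1; 2; 3; 4]); (0, [:: 0; 1; 2; 3; 4]); (0, [:: 0; 1; 2; 3; 4]); (0, [:: 0; 1; 2; 3; 4]); (0, [:: 0; 1; 2; 3; 4]); (0, [:: 0; 1; 2; 3; 4]); (0, [:: 0; 1; 2; 3; 4]); (0, [:: 0; 1; 2; 3; 4]); (0, [:: 0; 1; 2; 3; 4]); (0, [:: 0; 1; 2; 3; 4]); (0, [:: 0; 1; 2; 3; 4]); (0, [:: 0; 1; 2; 3; 4]); (0, [:: 0; 1; 2; 3; 4]); (0, [:: 0; 1; 2; 3; 4]); (0, [:: 0; 1; 2; 3; 4]); (0, [:: 0; 1; 2; 3; 4]); (0, [:: 0; 2; 4; 3; 1]); (0, [:: 0; 1; 2; 3; 4]); (1, [:: 2; 0; 3; 4;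 1]); (0, [:: 0; 1; 2; 3; 4]); (0, [:: 0; 1; 2; 3; 4]); (0, [:: 0; 1; 2; 3; 4]); (0, [:: 0; 2; 3; 4; 1]); (0, [:: 0; 1; 2; 3; 4]); (0, [:: 0; 1; 2; 3; 4]); (0, [:: 0; 1; 2; 3; 4]); (1, [:: 0; 2; 3; 4; 1]); (0, [:: 0; 1; 2; 3; 4]); (0, [:: 0; 1; 2; 3; 4]); (0, [:: 0; 1; 2; 3; 4]); (1, [:: 2; 0; 4; 3; 1]); (0, [:: 0; 1; 2; 3; 4]); (1, [:: 0; 2; 4; 3; 1]); (2, [:: 2; 3; 0; 1; 4]); (4, [:: 2; 3; 0; 1; 4]); (0, [:: 0; 1; 2; 3; 4]); (0, [:: 0; 1; 2; 3; 4]); (0, [:: 0; 1; 2; 3; 4]); (0, [:: 0; 1; 2; 3; 4]); (0, [:: 0; 1; 2; 3; 4]); (0, [:: 0; 1; 2; 3; 4]); (0, [:: 0; 1; 2; 3; 4]); (3, [:: 1; 4; 0; 2; 3]); (0, [:: 0; 1; 2; 3; 4]); (0, [:: 0; 1; 2; 3; 4]); (0, [:: 0; 1; 2; 3; 4]); (0, [:: 0; 1; 2; 3; 4]); (0, [:: 0; 1; 2; 3; 4]); (1, [:: 1; 4; 2; 3; 0]); (0, [:: 0; 1; 2; 3; 4]); (5, [:: 1; 4; 0; 2; 3]); (0, [:: 0; 1; 2; 3; 4]); (0, [:: 0; 1; 2; 3; 4]); (0, [:: 0; 1; 2; 3; 4]); (1, [:: 1; 4; 3; 2; 0]); (0, [::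 0; 1; 2; 3; 4]); (0, [:: 0; 1; 2; 3; 4]); (0, [:: 0; 1; 2; 3; 4]); (5, [:: 3; 2; 0; 1; 4]); (0, [:: 0; 1; 2; 3; 4]); (3, [:: 1; 4; 2; 0; 3]); (0, [:: 0; 1; 2; 3; 4]); (5, [:: 1; 4; 2; 0; 3]); (0, [:: 0; 1; 2; 3; 4]); (5, [:: 3; 2; 1; 0; 4]); (6, [:: 2; 3; 0; 1; 4]); (0, [:: 0; 1; 2; 3; 4]); (0, [:: 0; 1; 2; 3; 4]); (0, [:: 0; 1; 2; 3; 4]); (0, [:: 0; 1; 2; 3; 4]); (0, [:: 0; 1; 2; 3; 4]); (0, [:: 0; 1; 2; 3; 4]); (0, [:: 0; 1; 2; 3; 4]); (0, [:: 0; 1; 2; 3; 4]); (0, [:: 0; 1; 2; 3; 4]); (0, [:: 0; 1; 2; 3; 4]); (0, [:: 0; 1; 2; 3; 4]); (0, [:: 0; 1; 2; 3; 4]); (0, [:: 0; 1; 2; 3; 4]); (0, [:: 0; 1; 2; 3; 4]); (1, [:: 2; 4; 1; 0; 3]); (0, [:: 0; 1; 2; 3; 4]); (5, [:: 0; 3; 2; 4; 1]); (0, [:: 0; 1; 2; 3; 4]); (0, [:: 0; 1; 2; 3; 4]); (0, [:: 0; 1; 2; 3; 4]); (1, [:: 2; 4; 0; 1; 3]); (0, [:: 0; 1; 2; 3; 4]); (2, [:: 2; 0; 3; 4; 1]); (1, [:: 0; 1; 3; 4; 2]); (4, [:: 2; 0; 3; 4; 1]); (0, [:: 0; 1; 2;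 3; 4]); (0, [:: 0; 1; 2; 3; 4]); (0, [:: 0; 1; 2; 3; 4]); (5, [:: 0; 3; 4; 2; 1]); (1, [:: 0; 1; 4; 3; 2]); (4, [:: 2; 0; 4; 3; 1]); (4, [:: 2; 4; 0; 1; 3]); (0, [:: 0; 1; 2; 3; 4]); (0, [:: 0; 1; 2; 3; 4]); (0, [:: 0; 1; 2; 3; 4]); (0, [:: 0; 1; 2; 3; 4]); (0, [:: 0; 1; 2; 3; 4]); (0, [:: 0; 1; 2; 3; 4]); (1, [:: 1; 4; 2; 0; 3]); (0, [:: 0; 1; 2; 3; 4]); (5, [:: 1; 4; 0; 3; 2]); (0, [:: 0; 1; 2; 3; 4]); (0, [:: 0; 1; 2; 3; 4]); (0, [:: 0; 1; 2; 3; 4]); (0, [:: 0; 1; 2; 3; 4]); (0, [:: 0; 1; 2; 3; 4]); (4, [:: 0; 4; 1; 2; 3]); (0, [:: 0; 1; 2; 3; 4]); (0, [:: 0; 1; 2; 3; 4]); (0, [:: 0; 1; 2; 3; 4]); (1, [:: 1; 4; 0; 2; 3]); (0, [:: 0; 1; 2; 3; 4]); (4, [:: 0; 4; 2; 1; 3]); (0, [:: 0; 1; 2; 3; 4]); (4, [:: 4; 0; 2; 3; 1]); (5, [:: 3; 4; 0; 1; 2]); (0, [:: 0; 1; 2; 3; 4]); (0, [:: 0; 1; 2; 3; 4]); (5, [:: 1; 4; 3; 0; 2]); (0, [:: 0; 1; 2; 3; 4]); (0, [:: 0; 1; 2; 3; 4]); (5, [:: 3; 4; 1; 0; 2]); (0,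 [:: 0; 1; 2; 3; 4]); (0, [:: 0; 1; 2; 3; 4]); (0, [:: 0; 1; 2; 3; 4]); (0, [:: 0; 1; 2; 3; 4]); (0, [:: 0; 1; 2; 3; 4]); (0, [:: 0; 1; 2; 3; 4]); (0, [:: 0; 1; 2; 3; 4]); (0, [:: 0; 1; 2; 3; 4]); (0, [:: 0; 1; 2; 3; 4]); (0, [:: 0; 1; 2; 3; 4]); (0, [:: 0; 1; 2; 3; 4]); (0, [:: 0; 1; 2; 3; 4]); (0, [:: 0; 1; 2; 3; 4]); (0, [:: 0; 1; 2; 3; 4]); (2, [:: 0; 2; 3; 4; 1]); (0, [:: 0; 1; 2; 3; 4]); (1, [:: 1; 3; 0; 4; 2]); (1, [:: 1; 0; 3; 4; 2]); (4, [:: 0; 2; 3; 4; 1]); (0, [:: 0; 1; 2; 3; 4]); (0, [:: 0; 1; 2; 3; 4]); (0, [:: 0; 1; 2; 3; 4]); (1, [:: 1; 3; 4; 0; 2]); (0, [:: 0; 1; 2; 3; 4]); (0, [:: 0; 1; 2; 3; 4]); (0, [:: 0; 1; 2; 3; 4]); (5, [:: 3; 0; 2; 4; 1]); (0, [:: 0; 1; 2; 3; 4]); (0, [:: 0; 1; 2; 3; 4]); (1, [:: 1; 0; 4; 3; 2]); (4, [:: 0; 2; 4; 3; 1]); (0, [:: 0; 1; 2; 3; 4]); (5, [:: 3; 0; 4; 2; 1]); (4, [:: 4; 2; 0; 1; 3]); (0, [:: 0; 1; 2; 3; 4]); (0, [:: 0; 1; 2; 3; 4]); (0, [:: 0; 1;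 2; 3; 4]); (0, [:: 0; 1; 2; 3; 4]); (1, [:: 1; 4; 3; 0; 2]); (0, [:: 0; 1; 2; 3; 4]); (0, [:: 0; 1; 2; 3; 4]); (0, [:: 0; 1; 2; 3; 4]); (5, [:: 3; 2; 0; 4; 1]); (0, [:: 0; 1; 2; 3; 4]); (1, [:: 1; 4; 0; 3; 2]); (0, [:: 0; 1; 2; 3; 4]); (4, [:: 0; 4; 2; 3; 1]); (0, [:: 0; 1; 2; 3; 4]); (4, [:: 4; 0; 2; 1; 3]); (5, [:: 3; 4; 0; 2; 1]); (0, [:: 0; 1; 2; 3; 4]); (0, [:: 0; 1; 2; 3; 4]); (0, [:: 0; 1; 2; 3; 4]); (0, [:: 0; 1; 2; 3; 4]); (4, [:: 4; 0; 1; 2; 3]); (0, [:: 0; 1; 2; 3; 4]); (0, [:: 0; 1; 2; 3; 4]); (0, [:: 0; 1; 2; 3; 4]); (0, [:: 0; 1; 2; 3; 4]); (0, [:: 0; 1; 2; 3; 4]); (5, [:: 3; 2; 4; 0; 1]); (5, [:: 3; 4; 2; 0; 1]); (0, [:: 0; 1; 2; 3; 4]); (0, [:: 0; 1; 2; 3; 4]); (0, [:: 0; 1; 2; 3; 4]); (0, [:: 0; 1; 2; 3; 4]); (0, [:: 0; 1; 2; 3; 4]); (0, [:: 0; 1; 2; 3; 4]); (0, [:: 0; 1; 2; 3; 4]); (0, [:: 0; 1; 2; 3; 4]); (0, [:: 0; 1; 2; 3; 4]); (0, [:: 0; 1; 2; 3; 4]); (0, [:: 0; 1; 2; 3; 4]);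 (0, [:: 0; 1; 2; 3; 4]); (0, [:: 0; 1; 2; 3; 4]); (0, [:: 0; 1; 2; 3; 4]); (0, [:: 0; 1; 2; 3; 4]); (0, [:: 0; 1; 2; 3; 4]); (6, [:: 0; 2; 3; 4; 1]); (3, [:: 1; 2; 3; 4; 0]); (5, [:: 1; 2; 3; 4; 0]); (5, [:: 1; 3; 2; 4; 0]); (0, [:: 0; 1; 2; 3; 4]); (0, [:: 0; 1; 2; 3; 4]); (0, [:: 0; 1; 2; 3; 4]); (3, [:: 1; 2; 4; 3; 0]); (5, [:: 1; 2; 4; 3; 0]); (0, [:: 0; 1; 2; 3; 4]); (6, [:: 2; 0; 3; 4; 1]); (5, [:: 3; 1; 2; 4; 0]); (0, [:: 0; 1; 2; 3; 4]); (0, [:: 0; 1; 2; 3; 4]); (0, [:: 0; 1; 2; 3; 4]); (5, [:: 1; 3; 4; 2; 0]); (0, [:: 0; 1; 2; 3; 4]); (5, [:: 3; 1; 4; 2; 0]); (0, [:: 0; 1; 2; 3; 4]); (0, [:: 0; 1; 2; 3; 4]); (0, [:: 0; 1; 2; 3; 4]); (0, [:: 0; 1; 2; 3; 4]); (3, [:: 1; 4; 2; 3; 0]); (0, [:: 0; 1; 2; 3; 4]); (5, [:: 1; 4; 2; 3; 0]); (0, [:: 0; 1; 2; 3; 4]); (5, [:: 3; 2; 1; 4; 0]); (6, [:: 2; 3; 0; 4; 1]); (0, [:: 0; 1; 2; 3; 4]); (0, [:: 0; 1; 2; 3; 4]); (5, [:: 1; 4; 3; 2; 0]); (0, [:: 0;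 1; 2; 3; 4]); (0, [:: 0; 1; 2; 3; 4]); (5, [:: 3; 4; 1; 2; 0]); (0, [:: 0; 1; 2; 3; 4]); (0, [:: 0; 1; 2; 3; 4]); (0, [:: 0; 1; 2; 3; 4]); (0, [:: 0; 1; 2; 3; 4]); (5, [:: 3; 2; 4; 1; 0]); (5, [:: 3; 4; 2; 1; 0]); (0, [:: 0; 1; 2; 3; 4]); (0, [:: 0; 1; 2; 3; 4]); (0, [:: 0; 1; 2; 3; 4]); (0, [:: 0; 1; 2; 3; 4]); (0, [:: 0; 1; 2; 3; 4]); (6, [:: 2; 3; 4; 0; 1]); (0, [:: 0; 1; 2; 3; 4]); (0, [:: 0; 1; 2; 3; 4]); (0, [:: 0; 1; 2; 3; 4]); (0, [:: 0; 1; 2; 3; 4]); (0, [:: 0; 1; 2; 3; 4]); (0, [:: 0; 1; 2; 3; 4]); (0, [:: 0; 1; 2; 3; 4])].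
Definition ofn (n : nat) : 'I_5 := nth o0 ords5 n.
Definition checkw (c : seq bool) (w : nat * seq nat) :=
  K4code c ==> (2 < count id c) ==> (w.1 < 7) && matchG c (nth [::] Gcodes w.1) (map ofn w.2).
Lemma check_all : all2 checkw (gen 10) wits.
Proof. vm_compute. reflexivity. Qed.

Definition trips : seq ('I_5 * 'I_5 * 'I_5) :=
  [:: (o0,o1,o2); (o0,o1,o3); (o0,o2,o3); (o1,o2,o3); (o0,o1,o4);
      (o0,o2,o4); (o1,o2,o4); (o0,o3,o4); (o1,o3,o4); (o2,o3,o4)].
Definition s3 (t : 'I_5 * 'I_5 * 'I_5) : {set 'I_5} := [set t.1.1; t.1.2; t.2].
Definition triN (t : nat) : {set 'I_5} := s3 (nth (o0,o0,o0) trips t).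
Definition eq3b (x y z a b c : 'I_5) :=
  all (fun i => ((i == x) || (i == y) || (i == z)) == ((i == a) || (i == b) || (i == c))) ords5.

Lemma ords5P (x : 'I_5) : x \in ords5.
Proof.
have -> : ords5 = enum 'I_5.
  apply: (@inj_map _ _ val val_inj); rewrite val_enum_ord; reflexivity.
by rewrite mem_enum.
Qed.

Lemma seteq3b (x y z a b c : 'I_5) : ([set x; y; z] == [set a; b; c]) = eq3b x y z a b c.
Proof.
apply/eqP/idP => [E|H].
  by apply/allP => i _; move/setP: E => /(_ i); rewrite !inE => ->.
by apply/setP => i; rewrite !inE; exact/eqP/(allP H _ (ords5P i)).
Qed.

Lemma tri_b : all (fun x => all (fun y => all (fun z => dist3 x y z ==>
   (eq3b x y z (nth (o0,o0,o0) trips (tidx x y z)).1.1 (nth (o0,o0,o0) trips (tidx x y z)).1.2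
      (nth (o0,o0,o0) trips (tidx x y z)).2 && (tidx x y z < 10))) ords5) ords5) ords5.
Proof. vm_compute. reflexivity. Qed.

Lemma triE (x y z : 'I_5) : dist3 x y z ->
  [set x; y; z] = triN (tidx x y z) /\ tidx x y z < 10.
Proof.
move=> d.
have /allP/(_ x (ords5P x))/allP/(_ y (ords5P y))/allP/(_ z (ords5P z))/implyP/(_ d) := tri_b.
case/andP => H ->; split=> //.
by apply/eqP; rewrite /triN /s3 seteq3b.
Qed.

Lemma card3 (T : finType) (A : {set T}) : #|A| = 3 ->
  exists x y z, [&& x != y, x != z & y != z] /\ A = [set x; y; z].
Proof.
move=> H; move: H; case: (cards_eqP A) => s us.
case: s us => [|x [|y [|z [|w s]]]] //= us _.
exists x, y, z; move: us; rewrite !inE !negb_or; case/and3P => /andP [-> ->] -> _.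
by split=> //; apply/setP => i; rewrite !inE orbA.
Qed.

Lemma dist3_inj (h : 'I_5 -> 'I_5) x y z : injective h -> dist3 x y z -> dist3 (h x) (h y) (h z).
Proof. by move=> hi; rewrite /dist3 !(inj_eq hi). Qed.

Lemma imset3 (T U : finType) (f : T -> U) x y z : f @: [set x; y; z] = [set f x; f y; f z].
Proof. by rewrite !imsetU !imset_set1. Qed.

Definition PG (Gs : {set {set 'I_5}}) :=
  forall e, e \in Gs -> exists a b c, dist3 a b c /\ e = [set a; b; c].

Lemma P3 (E : {set {set 'I_5}}) : is_3graph E -> PG E.
Proof. by move=> H e /H /card3 [a [b [c [d ->]]]]; exists a, b, c. Qed.

Lemma finish (E Gs : {set {set 'I_5}}) code f :
  is_3graph E -> bijective f ->
  (forall x y z, dist3 x y z -> ([set x; y; z] \in E) = cf code (f x) (f y) (f z)) ->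
  PG Gs -> (forall a b c, dist3 a b c -> ([set a; b; c] \in Gs) = cf code a b c) ->
  iso_to5 E Gs.
Proof.
move=> E3 fb R PGs MG; exists f; split=> //.
have fi := bij_inj fb; case: fb => g fg gf.
have gi : injective g by apply: (can_inj gf).
apply/setP => e; apply/idP/idP.
  case/imsetP => e0 e0E ->; have [x [y [z [d E0]]]] := P3 E3 e0E.
  by rewrite E0 in e0E *; rewrite imset3 MG ?dist3_inj // -R.
move=> eG; have [a [b [c [d E0]]]] := PGs e eG; rewrite E0 in eG *.
have -> : [set a; b; c] = f @: [set g a; g b; g c] by rewrite imset3 !gf.
apply: imset_f; rewrite R ?dist3_inj // !gf -MG //.
Qed.

Lemma gen_mem n c : size c = n -> c \in gen n.
Proof.
elim: n c => [|n IH] [|b c] //= [sc].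
by rewrite mem_cat; case: b; [rewrite map_f ?IH | rewrite orbC map_f ?IH].
Qed.

Lemma all2_ex (A B : eqType) (r : A -> B -> bool) s t x :
  all2 r s t -> x \in s -> exists y, r x y.
Proof.
elim: s t => [|a s IH] [|b t] //= /andP [rab H].
by rewrite inE => /orP [/eqP -> | xs]; [exists b | exact: IH H xs].
Qed.

Lemma dist6 (a b d e : 'I_5) : [&& a != b, a != d, a != e, b != d, b != e & d != e] ->
  dist3 a b d /\ dist3 a b e /\ dist3 a d e.
Proof.
move=> /andP [ab /andP [ad /andP [ae /andP [bd /andP [be de]]]]].
by rewrite /dist3 ab ad ae bd be de.
Qed.

Lemma main5 (E : {set {set 'I_5}}) : is_3graph E -> K4m_free E -> 3 <= #|E| ->
  exists k, k < 7 /\ exists f, bijective f /\ forall x y z, dist3 x y z ->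
    ([set x; y; z] \in E) = cf (nth [::] Gcodes k) (f x) (f y) (f z).
Proof.
move=> E3 K4 cardE.
pose c := map (fun t => triN t \in E) (iota 0 10).
have cE : forall x y z, dist3 x y z -> cf c x y z = ([set x; y; z] \in E).
  move=> x y z d; have [-> lt] := triE d.
  by rewrite /cf (nth_map 0) ?size_iota // nth_iota.
have cin : c \in gen 10 by apply: gen_mem; rewrite size_map size_iota.
have [w cw] := all2_ex check_all cin.
have K : K4code c.
  apply/allP => a _; apply/allP => b _; apply/allP => d _; apply/allP => e _.
  apply/implyP => H; have [d1 [d2 d3]] := dist6 H.
  rewrite !cE //; apply/negP => /and3P [h1 h2 h3]; exact: (K4 a b d e H).
have Cnt : 2 < count id c.
  apply: leq_trans cardE _.
  rewrite count_map -size_filter -(size_map triN).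
  apply: leq_trans (card_size _); apply: subset_leq_card; apply/subsetP => e eE.
  have [x [y [z [dd E0]]]] := P3 E3 eE; have [Et lt] := triE dd.
  rewrite E0 Et; apply: map_f; rewrite mem_filter mem_iota /= -Et -E0 eE.
  by rewrite lt.
move: cw; rewrite /checkw K Cnt /= => /andP [k7 /andP [inj M]].
exists w.1; split=> //; exists (fof (map ofn w.2)); split.
  apply: injF_bij => x y /eqP.
  have /allP /(_ y (ords5P y)) /implyP H := allP inj x (ords5P x).
  by move=> /H /eqP.
move=> x y z d; rewrite -cE //.
have /allP /(_ y (ords5P y)) /allP /(_ z (ords5P z)) /implyP /(_ d) /eqP := allP M x (ords5P x).
done.
Qed.

Definition GL (L : seq ('I_5 * 'I_5 * 'I_5)) : {set {set 'I_5}} := [set X in map s3 L].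

Lemma PG_L L : all (fun t => dist3 t.1.1 t.1.2 t.2) L -> PG (GL L).
Proof.
move=> H e; rewrite inE => /mapP [t tL ->]; exists t.1.1, t.1.2, t.2.
by rewrite (allP H t tL).
Qed.

Definition memLb L code := all (fun x => all (fun y => all (fun z => dist3 x y z ==>
  (has (fun t => eq3b x y z t.1.1 t.1.2 t.2) L == cf code x y z)) ords5) ords5) ords5.

Lemma mem_L L code : memLb L code ->
  forall a b c, dist3 a b c -> ([set a; b; c] \in GL L) = cf code a b c.
Proof.
move=> H a b c d.
have /allP /(_ b (ords5P b)) /allP /(_ c (ords5P c)) /implyP /(_ d) /eqP <- := allP H a (ords5P a).
rewrite inE; apply/mapP/hasP => [[t tL E] | [t tL E]]; exists t => //.
  by rewrite -seteq3b E.
by apply/eqP; rewrite seteq3b.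
Qed.

Lemma iso_L L k (Gs : {set {set 'I_5}}) (E : {set {set 'I_5}}) f :
  Gs = GL L -> all (fun t => dist3 t.1.1 t.1.2 t.2) L -> memLb L (nth [::] Gcodes k) ->
  is_3graph E -> bijective f -> (forall x y z, dist3 x y z ->
    ([set x; y; z] \in E) = cf (nth [::] Gcodes k) (f x) (f y) (f z)) ->
  iso_to5 E Gs.
Proof.
move=> -> dL mL E3 fb R; apply: (finish E3 fb R); [exact: PG_L | exact: mem_L].
Qed.

Lemma io0 : (inord 0 : 'I_5) = o0. Proof. by apply/val_inj; rewrite /= inordK. Qed.
Lemma io1 : (inord 1 : 'I_5) = o1. Proof. by apply/val_inj; rewrite /= inordK. Qed.
Lemma io2 : (inord 2 : 'I_5) = o2. Proof. by apply/val_inj; rewrite /= inordK. Qed.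
Lemma io3 : (inord 3 : 'I_5) = o3. Proof. by apply/val_inj; rewrite /= inordK. Qed.
Lemma io4 : (inord 4 : 'I_5) = o4. Proof. by apply/val_inj; rewrite /= inordK. Qed.

Definition LC5 := [:: (o0,o1,o2); (o1,o2,o3); (o2,o3,o4); (o3,o4,o0); (o4,o0,o1)].
Definition LC5m := [:: (o0,o1,o2); (o1,o2,o3); (o2,o3,o4); (o3,o4,o0)].
Definition LF32 := [:: (o0,o1,o2); (o0,o1,o3); (o0,o1,o4); (o2,o3,o4)].
Definition LH1 := [:: (o0,o1,o2); (o0,o1,o3); (o0,o2,o4); (o0,o3,o4)].
Definition LF5 := [:: (o0,o1,o2); (o0,o1,o3); (o2,o3,o4)].
Definition LH2 := [:: (o0,o1,o2); (o0,o1,o3); (o0,o2,o4)].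
Definition LH3 := [:: (o0,o1,o2); (o0,o1,o3); (o0,o1,o4)].

Ltac gl := apply/setP => X; rewrite /GL !inE /tri5 /= !(io0, io1, io2, io3, io4) /s3 /= !orbA.

Lemma eC5 : C5 = GL LC5. Proof. by gl. Qed.
Lemma eC5m : C5m = GL LC5m. Proof. by gl. Qed.
Lemma eF32 : F32 = GL LF32. Proof. by gl. Qed.
Lemma eH1 : H1 = GL LH1. Proof. by gl. Qed.
Lemma eF5 : F5 = GL LF5. Proof. by gl. Qed.
Lemma eH2 : H2 = GL LH2. Proof. by gl. Qed.
Lemma eH3 : H3 = GL LH3. Proof. by gl. Qed.

Lemma ok0 : all (fun t => dist3 t.1.1 t.1.2 t.2) LC5 && memLb LC5 (nth [::] Gcodes 0).
Proof. vm_compute. reflexivity. Qed.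
Lemma ok1 : all (fun t => dist3 t.1.1 t.1.2 t.2) LC5m && memLb LC5m (nth [::] Gcodes 1).
Proof. vm_compute. reflexivity. Qed.
Lemma ok2 : all (fun t => dist3 t.1.1 t.1.2 t.2) LF32 && memLb LF32 (nth [::] Gcodes 2).
Proof. vm_compute. reflexivity. Qed.
Lemma ok3 : all (fun t => dist3 t.1.1 t.1.2 t.2) LH1 && memLb LH1 (nth [::] Gcodes 3).
Proof. vm_compute. reflexivity. Qed.
Lemma ok4 : all (fun t => dist3 t.1.1 t.1.2 t.2) LF5 && memLb LF5 (nth [::] Gcodes 4).
Proof. vm_compute. reflexivity. Qed.
Lemma ok5 : all (fun t => dist3 t.1.1 t.1.2 t.2) LH2 && memLb LH2 (nth [::] Gcodes 5).
Proof. vm_compute. reflexivity. Qed.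
Lemma ok6 : all (fun t => dist3 t.1.1 t.1.2 t.2) LH3 && memLb LH3 (nth [::] Gcodes 6).
Proof. vm_compute. reflexivity. Qed.

Theorem lemma2p11 (V : finType) (E : {set {set V}}) :
  #|V| = 5 -> is_3graph E -> K4m_free E -> 3 <= #|E| ->
  iso_to5 E C5 \/ iso_to5 E C5m \/ iso_to5 E F32 \/ iso_to5 E H1 \/
  iso_to5 E F5 \/ iso_to5 E H2 \/ iso_to5 E H3.
Proof.
move=> HV E3 K4 cE.
pose h : V -> 'I_5 := fun v => cast_ord HV (enum_rank v).
pose hi : 'I_5 -> V := fun i => enum_val (cast_ord (esym HV) i).
have hK : cancel h hi by move=> v; rewrite /h /hi cast_ordK enum_rankK.
have hiK : cancel hi h by move=> i; rewrite /h /hi enum_valK cast_ordKV.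
have hinj := can_inj hK.
have hiinj := can_inj hiK.
pose E' : {set {set 'I_5}} := [set h @: (e : {set V}) | e : {set V} in E].
have iE : injective (fun e : {set V} => h @: e) := imset_inj hinj.
have mE : forall X, (X \in E) = (h @: X \in E') by move=> X; rewrite /E' mem_imset.
have E3' : is_3graph E'.
  by move=> e /imsetP [e0 e0E ->]; rewrite card_imset //; exact: E3.
have K4' : K4m_free E'.
  move=> a b c d H [h1 [h2 h3]]; apply: (K4 (hi a) (hi b) (hi c) (hi d)).
    by rewrite !(inj_eq hiinj).
  by rewrite !mE !imset3 !hiK.
have cE' : #|E'| = #|E| by rewrite card_imset.
have [k [k7 [f [fb R]]]] := main5 E3' K4' (etrans (leq_trans cE (eq_leq (esym cE'))) erefl).
have iso : forall L Gs, Gs = GL L -> all (fun t => dist3 t.1.1 t.1.2 t.2) L ->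
    memLb L (nth [::] Gcodes k) -> iso_to5 E Gs.
  move=> L Gs eG dL mL; have [f' [fb' eq']] := iso_L eG dL mL E3' fb R.
  exists (f' \o h); split; first by apply: bij_comp => //; exists hi.
  rewrite -eq' /E' -imset_comp; apply: eq_imset => e /=.
  by rewrite imset_comp.
case: k k7 R iso => [|[|[|[|[|[|[|k]]]]]]] // _ R iso.
- by left; case/andP: ok0 => d m; exact: iso _ _ eC5 d m.
- by right; left; case/andP: ok1 => d m; exact: iso _ _ eC5m d m.
- by do 2 right; left; case/andP: ok2 => d m; exact: iso _ _ eF32 d m.
- by do 3 right; left; case/andP: ok3 => d m; exact: iso _ _ eH1 d m.
- by do 4 right; left; case/andP: ok4 => d m; exact: iso _ _ eF5 d m.
- by do 5 right; left; case/andP: ok5 => d m; exact: iso _ _ eH2 d m.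
- by do 6 right; case/andP: ok6 => d m; exact: iso _ _ eH3 d m.
Qed.
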